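(* For every integer $s>2$ and every odd integer $k$ with $1<k<2s$, $F_{s,k}(2s)=0$.
   Context: For an integer $j\ge0$, $\binom{x}{j}=x(x-1)\cdots(x-j+1)/j!$ as a polynomial in $x$, and $\binom{x}{j}=0$ for $j<0$. For integers $s\ge1$, $k\ge1$, the Moser polynomial is $F_{s,k}(x)=\sum_{p=1}^{s}(-1)^{p-1}p^{k-1}\binom{x}{s-p}$. *)

(* Defs.v *)
From HB Require Import structures.
From mathcomp Require Import all_boot all_order all_algebra.
Set Implicit Arguments. Unset Strict Implicit. Unset Printing Implicit Defensive.
Import Order.TTheory GRing.Theory Num.Theory.
Local Open Scope ring_scope.

(* binomial polynomial  binom(x, j) = x(x-1)...(x-j+1)/j!  in Q[x], for j : nat
   (the case j < 0 does not arise since we only use it with s - p >= 0). *)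
Definition binom_poly (j : nat) : {poly rat} :=
  (j`!%:R)^-1 *: \prod_(i < j) ('X - (i%:R)%:P).

Definition moser_poly (s k : nat) : {poly rat} :=
  \sum_(1 <= p < s.+1) ((-1) ^+ (p - 1) * (p ^ (k - 1))%:R) *: binom_poly (s - p).

(* Main.v *)
Require Import Defs.
From HB Require Import structures.
From mathcomp Require Import all_boot all_order all_algebra.
Import GRing.Theory Num.Theory.
Local Open Scope ring_scope.
From mathcomp Require Import ring zify.

Lemma binom_eval (j n : nat) : (j <= n)%N ->
  (binom_poly j).[n%:R] = 'C(n, j)%:R.
Proof.
move=> hjn; rewrite /binom_poly hornerZ horner_prod.
under eq_bigr => i _ do rewrite hornerXsubC -natrB ?(leq_trans (ltnW (ltn_ord i)) hjn) //.
rewrite -natr_prod -ffact_prod -bin_ffact natrM mulrC mulfK //.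
by rewrite pnatr_eq0 -lt0n fact_gt0.
Qed.

Lemma size_diff (p : {poly rat}) : p != 0 ->
  (size (p - (p \Po ('X + 1%:P)))%R < size p)%N.
Proof.
move=> p0.
have sq : size (p \Po ('X + 1%:P)) = size p by rewrite size_comp_poly2 // size_XaddC.
have lq : lead_coef (p \Po ('X + 1%:P)) = lead_coef p.
  by rewrite lead_coef_comp ?size_XaddC // lead_coefXaddC expr1n mulr1.
have sp : (0 < size p)%N by rewrite size_poly_gt0.
rewrite -[size p]prednK //; rewrite ltnS; apply/leq_sizeP => j hj.
rewrite coefB.
move: hj; rewrite leq_eqVlt => /orP[/eqP <-|hj].
  have := lq; rewrite /lead_coef sq => ->; exact: subrr.
rewrite !nth_default ?subrr // ?sq; by rewrite -(prednK sp).
Qed.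

Lemma alt_sum (n : nat) (p : {poly rat}) : (size p <= n)%N ->
  \sum_(0 <= i < n.+1) (-1) ^+ i * 'C(n, i)%:R * p.[i%:R] = 0.
Proof.
elim: n p => [|n IH] p hp.
  by move: hp; rewrite leqn0 size_poly_eq0 => /eqP ->; rewrite big_nat1 horner0 mulr0.
have [->|p0] := eqVneq p 0.
  by rewrite big1 // => i _; rewrite horner0 mulr0.
have hq : (size (p - (p \Po ('X + 1%:P)))%R <= n)%N.
  by rewrite -ltnS (leq_trans (size_diff _ p0)).
rewrite -[RHS](IH _ hq).
have E1 : \sum_(0 <= i < n.+2) (-1) ^+ i * 'C(n, i)%:R * p.[i%:R]
        = \sum_(0 <= i < n.+1) (-1) ^+ i * 'C(n, i)%:R * p.[i%:R].
  by rewrite big_nat_recr //= bin_small // mulr0 mul0r addr0.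
rewrite [LHS]big_nat_recl // bin0 expr0 !mul1r.
under eq_bigr => i _ do rewrite binS natrD mulrDr mulrDl.
rewrite big_split /= addrA.
have E2 : p.[0%:R] + \sum_(0 <= i < n.+1) (-1) ^+ i.+1 * 'C(n, i.+1)%:R * p.[i.+1%:R]
   = \sum_(0 <= i < n.+2) (-1) ^+ i * 'C(n, i)%:R * p.[i%:R].
  by rewrite [RHS]big_nat_recl // bin0 expr0 !mul1r.
rewrite E2 E1.
under [RHS]eq_bigr => i _ do rewrite hornerD hornerN horner_comp hornerD hornerX hornerC mulrDr mulrN.
rewrite big_split /= sumrN.
congr (_ + _); rewrite -sumrN; apply: eq_bigr => i _.
by rewrite exprS mulN1r !mulNr -natr1.
Qed.


Theorem mainTheorem20 (s k : nat) :
  (2 < s)%N -> odd k -> (1 < k)%N -> (k < 2 * s)%N ->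
  (moser_poly s k).[(2 * s)%:R] = 0.
Proof.
move=> hs hk hk1 hk2.
pose T : rat := \sum_(1 <= p < s.+1) (-1) ^+ (p - 1) * (p ^ (k - 1))%:R * 'C(2 * s, s - p)%:R.
have ET : (moser_poly s k).[(2 * s)%:R] = T.
  rewrite /moser_poly horner_sum; apply: eq_bigr => p _.
  by rewrite hornerZ binom_eval //; lia.
rewrite ET.
have hke : odd (k - 1) = false.
  clear -hk hk1; by move: hk hk1; case: k => // k1; rewrite subSS subn0 /= => /negPf.
pose f i := (-1) ^+ i * 'C(2 * s, i)%:R * (i%:R - s%:R) ^+ (k - 1) : rat.
pose g p := (-1) ^+ (s + p) * 'C(2 * s, s - p)%:R * p%:R ^+ (k - 1) : rat.
have H : \sum_(0 <= i < (2 * s).+1) f i = 0.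
  rewrite -[RHS](alt_sum (2 * s) (('X - (s%:R)%:P) ^+ (k - 1))); last first.
    rewrite size_exp_XsubC; lia.
  apply: eq_bigr => i _; by rewrite /f horner_exp hornerXsubC.
have h1 : (s <= (2 * s).+1)%N by lia.
have h2 : (s <= s.+1)%N by lia.
have h3 : (s.+1 <= (2 * s).+1)%N by lia.
rewrite (@big_cat_nat _ _ _ s _ _ _ _ (leq0n s) h1) /= in H.
rewrite (@big_cat_nat _ _ _ s.+1 _ _ _ _ h2 h3) /= in H.
rewrite big_nat1 in H.
have fs : f s = 0.
  have hk0 : (k - 1 == 0)%N = false by apply/negbTE; rewrite subn_eq0 -ltnNge.
  by rewrite /f subrr expr0n hk0 mulr0.
have L : \sum_(0 <= i < s) f i = \sum_(1 <= p < s.+1) g p.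
  rewrite big_nat_rev big_add1 /=; apply: eq_big_nat => i /andP[_ hi].
  have sg : (-1) ^+ (s - i.+1) = (-1) ^+ (s + i.+1) :> rat.
    by rewrite -signr_odd -[RHS]signr_odd oddB ?oddD.
  have sk : (-1) ^+ (k - 1) = 1 :> rat by rewrite -signr_odd hke.
  have e : ((s - i.+1)%:R - s%:R : rat) = - (i.+1)%:R.
    by rewrite natrB //; ring.
  by rewrite /f /g add0n sg e (exprNn (i.+1%:R : rat)) sk mul1r.
have R : \sum_(s.+1 <= i < (2 * s).+1) f i = \sum_(1 <= p < s.+1) g p.
  rewrite -{1}[s.+1]add1n big_addn.
  have -> : ((2 * s).+1 - s = s.+1)%N by lia.
  apply: eq_big_nat => p /andP[hp1 hp2].
  rewrite /f /g natrD addrK addnC -(@bin_sub (2 * s) (s + p)); last by lia.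
  by have -> : (2 * s - (s + p) = s - p)%N by lia.
rewrite L R fs add0r in H.
have G : \sum_(1 <= p < s.+1) g p = - (-1) ^+ s * T.
  rewrite /T mulr_sumr; apply: eq_big_nat => p /andP[hp1 hp2].
  rewrite /g exprD natrX.
  have -> : p = (p - 1).+1 by lia.
  rewrite exprS subSS subn0; ring.
rewrite G in H.
have : (2 * (- (-1) ^+ s)) * T = 0 by rewrite -H; ring.
move/eqP; rewrite mulf_eq0 => /orP[|/eqP //].
by rewrite mulf_eq0 oppr_eq0 signr_eq0 orbF.
Qed.
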